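(* If $G$ is a connected locally Dirac graph of order $n \ge 9$, then $\operatorname{diam}(G) \le \lfloor n/3 \rfloor - 1$. Moreover, this bound is sharp: for every integer $m \ge 3$, the graph $P_m \boxtimes K_3$ is a connected locally Dirac graph of order $n=3m$ with diameter $n/3 - 1 = m-1$.
   Context: A graph $G$ is locally Dirac if for every vertex $v \in V(G)$ and every $u \in N(v)$, $\deg_{\langle N(v)\rangle}(u) \ge \deg_G(v)/2$, where $N(v)$ is the open neighbourhood of $v$ and $\langle N(v)\rangle$ the subgraph induced by it. $P_m$ is the path on $m$ vertices, $K_3$ the triangle, and $G\boxtimes H$ the strong product: vertex set $V(G)\times V(H)$, with $(u,v)\sim(x,y)$ iff ($u=x$ and $vy\in E(H)$) or ($v=y$ and $ux\in E(G)$) or ($ux\in E(G)$ and $vy\in E(H)$). *)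

(* Defs.v *)
From mathcomp Require Import all_boot.
Set Implicit Arguments. Unset Strict Implicit. Unset Printing Implicit Defensive.

Section Graphs.
Variable T : finType.
Variable e : rel T.

Definition simple_graph := symmetric e /\ irreflexive e.

Definition nbhd (v : T) : {set T} := [set u | e v u].

Definition deg (v : T) : nat := #|nbhd v|.

Definition deg_in_nbhd (v u : T) : nat := #|[set w in nbhd v | e u w]|.

(* locally Dirac: deg_{<N(v)>}(u) >= deg_G(v)/2, i.e. 2*deg_{<N(v)>}(u) >= deg_G(v) *)
Definition locally_dirac : Prop :=
  forall v u, u \in nbhd v -> deg v <= 2 * deg_in_nbhd v u.

Definition connected_graph : Prop := forall x y, connect e x y.

Definition walkb (x y : T) (k : nat) : bool :=
  [exists p : k.-tuple T, path e x p && (last x p == y)].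

(* graph distance: least k with a walk of length k from x to y
   (equals #|T| if no such walk exists; irrelevant for connected graphs) *)
Definition dist (x y : T) : nat := find (walkb x y) (iota 0 #|T|).

Definition diam : nat := \max_(x : T) \max_(y : T) dist x y.
End Graphs.

Definition Prel (m : nat) : rel 'I_m := fun i j => (i.+1 == j) || (j.+1 == i).

Definition K3rel : rel 'I_3 := fun a b => a != b.

Definition strong (T1 T2 : finType) (e1 : rel T1) (e2 : rel T2) : rel (T1 * T2)%type :=
  fun p q =>
    [|| (p.1 == q.1) && e2 p.2 q.2,
        (p.2 == q.2) && e1 p.1 q.1
      | e1 p.1 q.1 && e2 p.2 q.2].

(* Main.v *)
Require Import Defs.
From mathcomp Require Import all_boot zify.
Set Implicit Arguments. Unset Strict Implicit. Unset Printing Implicit Defensive.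

Section Gen.
Variable T : finType.
Variable e : rel T.

Lemma cardP_sum (P : pred T) : #|[set t | P t]| = \sum_t (P t : nat).
Proof.
rewrite -sum1_card big_mkcond /=; apply: eq_bigr => t _; rewrite inE.
by case: (P t).
Qed.

Lemma sum_eq_ind (u : T) : \sum_t ((t == u) : nat) = 1.
Proof.
rewrite (bigD1 u) //= eqxx big1 // => t /negbTE -> //.
Qed.

Lemma leq_sumT (F G : T -> nat) : (forall t, F t <= G t) -> \sum_t F t <= \sum_t G t.
Proof. by move=> h; apply: leq_sum => t _; apply: h. Qed.

Lemma walkbP x y k :
  reflect (exists p : seq T, [/\ size p = k, path e x p & last x p = y]) (walkb e x y k).
Proof.
apply: (iffP existsP) => [[p /andP[hp /eqP hl]] | [p [hs hp hl]]].
  by exists (tval p); rewrite size_tuple.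
have hs' : size p == k by rewrite hs.
by exists (Tuple hs'); rewrite /= hp hl eqxx.
Qed.

Lemma walk0 x y : walkb e x y 0 = (x == y).
Proof.
apply/walkbP/eqP => [[p [/size0nil -> _ <-]] // | ->].
by exists [::].
Qed.

Lemma walk_step x u v k : walkb e x u k -> e u v -> walkb e x v k.+1.
Proof.
move=> /walkbP [p [hs hp hl]] huv; apply/walkbP; exists (rcons p v).
by rewrite size_rcons hs rcons_path hp last_rcons hl huv.
Qed.

Lemma walk_cons x u y k : e x u -> walkb e u y k -> walkb e x y k.+1.
Proof.
move=> hxu /walkbP [p [hs hp hl]]; apply/walkbP; exists (u :: p).
by rewrite /= hs hxu hp hl.
Qed.

Lemma walk_pred x y k : walkb e x y k.+1 -> exists u, walkb e x u k /\ e u y.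
Proof.
move=> /walkbP [p [hs hp hl]].
case/lastP: p hs hp hl => [//|q z].
rewrite size_rcons rcons_path last_rcons => -[hs] /andP[hq hz] <-.
exists (last x q); split => //; apply/walkbP; by exists q.
Qed.

Hypothesis esym : symmetric e.
Hypothesis eirr : irreflexive e.

Lemma walk_rev k : forall x y, walkb e x y k -> walkb e y x k.
Proof.
elim: k => [|k IH] x y.
  by rewrite !walk0 eq_sym.
move=> /walk_pred [u [hu huy]].
apply: (@walk_cons y u x k); first by rewrite esym.
exact: IH.
Qed.

Lemma dist_min x y k : walkb e x y k -> dist e x y <= k.
Proof.
move=> hw; rewrite leqNgt; apply/negP => hlt.
have hs := find_size (walkb e x y) (iota 0 #|T|).
rewrite size_iota in hs.
have := before_find 0 hlt.
by rewrite nth_iota ?add0n ?hw //; apply: leq_trans hlt hs.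
Qed.

Hypothesis conn : connected_graph e.

Lemma dist_walk x y : walkb e x y (dist e x y).
Proof.
have : has (walkb e x y) (iota 0 #|T|).
  have /connectP [p hp ->] := conn x y.
  case: (shortenP hp) => p' hp' hu _.
  apply/hasP; exists (size p').
    rewrite mem_iota add0n /=.
    have := card_uniqP hu; rewrite /= => hc.
    have := max_card (mem (x :: p')); rewrite hc /=. done.
  by apply/walkbP; exists p'.
move=> hh; have := nth_find 0 hh.
rewrite nth_iota ?add0n //.
by move: hh; rewrite has_find size_iota.
Qed.

Lemma dist_xx x : dist e x x = 0.
Proof. by apply/eqP; rewrite -leqn0; apply: dist_min; rewrite walk0. Qed.

Lemma dist0 x y : dist e x y = 0 -> x = y.
Proof. by move=> h; have := dist_walk x y; rewrite h walk0 => /eqP. Qed.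

Lemma dist_edge x u v : e u v -> dist e x v <= (dist e x u).+1.
Proof. by move=> huv; apply: dist_min; apply: walk_step huv; apply: dist_walk. Qed.

Lemma dist_edge' x u v : e u v -> dist e x u <= (dist e x v).+1.
Proof. by rewrite esym; apply: dist_edge. Qed.

Lemma dist_sym x y : dist e x y = dist e y x.
Proof.
by apply/eqP; rewrite eqn_leq !dist_min // walk_rev // dist_walk.
Qed.

Lemma dist_pred x v k : dist e x v = k.+1 -> exists u, e u v /\ dist e x u = k.
Proof.
move=> h; have := dist_walk x v; rewrite h => /walk_pred [u [hw huv]].
exists u; split => //; apply/eqP; rewrite eqn_leq dist_min //=.
by have := dist_edge x huv; rewrite h.
Qed.

Lemma dist_down x : forall n y, dist e x y = n -> forall j, j <= n -> exists z, dist e x z = j.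
Proof.
elim=> [|n IH] y hy j hj.
  by exists y; move: hj; rewrite leqn0 hy => /eqP ->.
case: (ltngtP j n.+1) hj => // [hj _| -> _]; last by exists y.
have [u [_ hu]] := dist_pred hy; exact: IH hu j hj.
Qed.

End Gen.

Section Main.
Variable T : finType.
Variable e : rel T.
Hypothesis esym : symmetric e.
Hypothesis eirr : irreflexive e.
Hypothesis conn : connected_graph e.
Hypothesis dir : locally_dirac e.

Lemma cardT_sum : #|T| = \sum_(t : T) 1.
Proof. by rewrite sum1_card. Qed.

Lemma dirac v u : e v u -> \sum_t (e v t : nat) <= 2 * \sum_t ((e v t && e u t) : nat).
Proof.
move=> h; have := dir (u := u) (v := v); rewrite inE => /(_ h).
rewrite /deg /deg_in_nbhd /nbhd.
have -> : [set w in [set u0 | e v u0] | e u w] = [set w | e v w && e u w].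
  by apply/setP => t; rewrite !inE.
by rewrite !cardP_sum.
Qed.

Notation d := (dist e).

Lemma dv0 x t : (t == x) = (d x t == 0).
Proof.
apply/eqP/eqP => [-> | h]; first exact: dist_xx.
by rewrite (dist0 conn h).
Qed.

Lemma layer3 x k u v w : e u v -> e v w -> d x u = k -> d x v = k.+1 -> d x w = k.+2 ->
  3 <= \sum_t ((d x t == k.+1) : nat).
Proof.
move=> huv hvw hu hv hw.
have hd1 := dirac hvw.
have hd2 := dirac (u := u) (v := v) (ltac:(by rewrite esym)).
have p1 : forall t, (e v t && e w t) + (e v t && e u t) + (t == u) + (t == w)
     <= e v t + (e v t && (d x t == k.+1)).
  move=> t.
  have f1 : e v t ==> (k <= d x t <= k.+2).
    apply/implyP => h; have := dist_edge conn x h; have := dist_edge' esym conn x h; lia.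
  have f2 : e w t ==> (k.+1 <= d x t).
    apply/implyP => h; have := dist_edge' esym conn x h; lia.
  have f3 : e u t ==> (d x t <= k.+1).
    apply/implyP => h; have := dist_edge conn x h; lia.
  have f4 : (t == u) ==> [&& d x t == k, e v t & ~~ e u t].
    apply/implyP => /eqP ->; rewrite hu eqxx eirr esym huv; done.
  have f5 : (t == w) ==> [&& d x t == k.+2, e v t & ~~ e w t].
    apply/implyP => /eqP ->; rewrite hw eqxx eirr hvw; done.
  move: f1 f2 f3 f4 f5.
  case: (e v t); case: (e w t); case: (e u t); case: (t == u); case: (t == w);
   rewrite /=; lia.
have p2 : forall t, (e v t && (d x t == k.+1)) + (t == v) <= (d x t == k.+1).
  move=> t; have f : (t == v) ==> (d x t == k.+1) && ~~ e v t.
    by apply/implyP => /eqP ->; rewrite hv eqxx eirr.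
  move: f; case: (e v t); case: (t == v); rewrite /=; lia.
have s1 := leq_sum (index_enum T) (P := xpredT) (fun t _ => p1 t).
have s2 := leq_sum (index_enum T) (P := xpredT) (fun t _ => p2 t).
rewrite !big_split /= !sum_eq_ind in s1 s2.
lia.
Qed.

Lemma deg5 v z : d v z = 3 -> 5 <= \sum_t (e v t : nat).
Proof.
move=> hz.
have [w [hwz hw]] := dist_pred conn hz.
have [u [huw hu]] := dist_pred conn hw.
have [v' [hvu hv']] := dist_pred conn hu.
have hv'v := dist0 conn hv'; subst v'.
have du := dirac (u := v) (v := u) (ltac:(by rewrite esym)).
have dw1 := dirac (u := u) (v := w) (ltac:(by rewrite esym)).
have dw2 := dirac hwz.
have fe1 : forall t, e v t ==> (d v t == 1).
  move=> t; apply/implyP => h; have := dist_edge conn v h; rewrite dist_xx.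
  have : d v t != 0 by rewrite -dv0; apply/eqP => ht; rewrite ht eirr in h.
  lia.
have p1 : forall t, (e u t && e v t) + (e u t && (d v t == 2)) + (t == v) <= e u t.
  move=> t; have f1 := fe1 t.
  have f2 : (t == v) ==> (e u t && (d v t == 0)).
    by apply/implyP => /eqP ->; rewrite esym hvu dist_xx.
  move: f1 f2; case: (e u t); case: (e v t); case: (t == v); rewrite /=; lia.
have p2 : forall t, (e u t && e v t) + (t == u) <= e v t.
  move=> t; have f : (t == u) ==> (e v t && ~~ e u t).
    by apply/implyP => /eqP ->; rewrite hvu eirr.
  move: f; case: (e u t); case: (e v t); case: (t == u); rewrite /=; lia.
have p3 : forall t, (e w t && e u t) + (t == u) + (t == w)
      <= (e w t && (d v t == 1)) + (e u t && (d v t == 2)).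
  move=> t.
  have f1 : e w t ==> (1 <= d v t).
    apply/implyP => h; have := dist_edge' esym conn v h; lia.
  have f2 : e u t ==> (d v t <= 2).
    apply/implyP => h; have := dist_edge conn v h; lia.
  have f3 : (t == u) ==> [&& e w t, d v t == 1 & ~~ e u t].
    by apply/implyP => /eqP ->; rewrite esym huw hu eirr.
  have f4 : (t == w) ==> [&& e u t, d v t == 2 & ~~ e w t].
    by apply/implyP => /eqP ->; rewrite huw hw eirr.
  move: f1 f2 f3 f4; case: (e w t); case: (e u t); case: (t == u); case: (t == w);
   rewrite /=; lia.
have p4 : forall t, (e w t && e z t) + (t == z) <= (e w t && (d v t == 2)) + (e w t && (d v t == 3)).
  move=> t.
  have f1 : e z t ==> (2 <= d v t).
    apply/implyP => h; have := dist_edge' esym conn v h; lia.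
  have f2 : e w t ==> (d v t <= 3).
    apply/implyP => h; have := dist_edge conn v h; lia.
  have f3 : (t == z) ==> [&& e w t, d v t == 3 & ~~ e z t].
    by apply/implyP => /eqP ->; rewrite hwz hz eirr.
  move: f1 f2 f3; case: (e w t); case: (e z t); case: (t == z); rewrite /=; lia.
have p5 : forall t, (e w t && (d v t == 1)) + (e w t && (d v t == 2)) + (e w t && (d v t == 3)) <= e w t.
  by move=> t; case: (e w t); rewrite /=; lia.
have s1 := leq_sum (index_enum T) (P := xpredT) (fun t _ => p1 t).
have s2 := leq_sum (index_enum T) (P := xpredT) (fun t _ => p2 t).
have s3 := leq_sum (index_enum T) (P := xpredT) (fun t _ => p3 t).
have s4 := leq_sum (index_enum T) (P := xpredT) (fun t _ => p4 t).
have s5 := leq_sum (index_enum T) (P := xpredT) (fun t _ => p5 t).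
rewrite !big_split /= !sum_eq_ind in s1 s2 s3 s4 s5.
lia.
Qed.

Lemma part1_dist x y : 9 <= #|T| -> d x y <= #|T| %/ 3 - 1.
Proof.
move=> hn.
set D := d x y.
case: (leqP D 2) => hD; first lia.
have dx : 5 <= \sum_t (e x t : nat).
  have [z hz] := dist_down conn (erefl D) (j := 3) hD.
  exact: deg5 hz.
have dy : 5 <= \sum_t (e y t : nat).
  have hyx : d y x = D by rewrite (dist_sym esym conn).
  have [z hz] := dist_down conn hyx (j := 3) hD.
  exact: deg5 hz.
have base : 6 <= \sum_t ((d x t < 2) : nat).
  have p : forall t, (t == x) + e x t <= (d x t < 2).
    move=> t; have f1 : (t == x) ==> (d x t == 0) && ~~ e x t.
      by apply/implyP => /eqP ->; rewrite dist_xx eirr.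
    have f2 : e x t ==> (d x t <= 1).
      by apply/implyP => h; have := dist_edge conn x h; rewrite dist_xx.
    move: f1 f2; case: (e x t); case: (t == x); rewrite /=; lia.
  have s := leq_sum (index_enum T) (P := xpredT) (fun t _ => p t).
  rewrite !big_split /= !sum_eq_ind in s; lia.
have ind : forall j, 2 <= j -> j <= D - 1 -> 3 * j <= \sum_t ((d x t < j) : nat).
  elim=> [|j IH] // hj hjD.
  case: (leqP j 1) => hj1.
    have -> : j.+1 = 2 by lia. lia.
  have IHj := IH hj1 (ltnW hjD).
  have [k hk] : exists k, j = k.+1 by exists j.-1; lia.
  subst j.
  have [w hw] := dist_down conn (erefl D) (j := k.+2) (ltac:(lia)).
  have [v [hvw hv]] := dist_pred conn hw.
  have [u [huv hu]] := dist_pred conn hv.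
  have L := layer3 huv hvw hu hv hw.
  have p : forall t, (d x t < k.+1) + (d x t == k.+1) = (d x t < k.+2).
    by move=> t; case: (ltngtP (d x t) k.+1) => h; rewrite /=; lia.
  have s : \sum_t ((d x t < k.+2) : nat) = \sum_t ((d x t < k.+1) : nat) + \sum_t ((d x t == k.+1) : nat).
    rewrite -big_split; apply: eq_bigr => t _; by rewrite -p.
  rewrite s. lia.
have hs := ind (D - 1) (ltac:(lia)) (leqnn _).
have p : forall t, (d x t < D - 1) + (t == y) + e y t <= 1.
  move=> t; have f1 : (t == y) ==> (d x t == D) && ~~ e y t.
    by apply/implyP => /eqP ->; rewrite eqxx eirr.
  have f2 : e y t ==> (D <= (d x t).+1).
    by apply/implyP => h; have := dist_edge' esym conn x h.
  move: f1 f2; case: (e y t); case: (t == y); rewrite /=; lia.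
have s := leq_sum (index_enum T) (P := xpredT) (fun t _ => p t).
rewrite !big_split /= !sum_eq_ind -cardT_sum in s.
lia.
Qed.

End Main.

Lemma part1 (T : finType) (e : rel T) :
  simple_graph e -> connected_graph e -> locally_dirac e -> 9 <= #|T| ->
  diam e <= #|T| %/ 3 - 1.
Proof.
move=> [hs hi] hc hd hn.
apply/bigmax_leqP => x _; apply/bigmax_leqP => y _.
exact: part1_dist.
Qed.

Section Ex.
Variable m : nat.
Hypothesis hm : 3 <= m.
Notation V := ('I_m * 'I_3)%type.
Notation E := (strong (@Prel m) K3rel).

Definition near (i j : nat) : bool := [|| i == j, i.+1 == j | j.+1 == i].

Lemma strongE (p q : V) : E p q = (p != q) && near p.1 q.1.
Proof.
case: p q => [i a] [j b]; rewrite /strong /Prel /K3rel /near /= xpair_eqE /=.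
have h : (i == j :> nat) = (i == j) by [].
case: (ltngtP i j) => hij.
- have -> : (i == j) = false by apply/eqP => h'; rewrite h' ltnn in hij.
  have -> : (j.+1 == i) = false by apply/eqP; lia.
  by case: (i.+1 == j); case: (a == b).
- have -> : (i == j) = false by apply/eqP => h'; rewrite h' ltnn in hij.
  have -> : (i.+1 == j) = false by apply/eqP; lia.
  by case: (j.+1 == i); case: (a == b).
- have -> : (i == j) by apply/eqP; apply: val_inj.
  rewrite hij !eqn_leq ltnn ?andbF /=.
  by case: (a == b).
Qed.

Lemma near_sym i j : near i j = near j i.
Proof. by rewrite /near eq_sym; case: (i == j); case: (i.+1 == j); case: (j.+1 == i). Qed.

Lemma Esym : symmetric E.
Proof. by move=> p q; rewrite !strongE eq_sym near_sym. Qed.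

Lemma Eirr : irreflexive E.
Proof. by move=> p; rewrite strongE eqxx. Qed.

Lemma near_row (p q : V) : E p q -> (q.1 : nat) <= p.1 + 1.
Proof. rewrite strongE /near => /andP[_ h]; case/or3P: h => /eqP; lia. Qed.

Lemma h0 : 0 < m. Proof. lia. Qed.
Definition z0 : V := (Ordinal h0, ord0).

Lemma Econn : connected_graph E.
Proof.
have hc : forall j (hj : j < m) b, connect E z0 (Ordinal hj, b).
  elim=> [|j IH] hj b.
    have -> : Ordinal hj = Ordinal h0 by apply: val_inj.
    case: (eqVneq b ord0) => [-> | hb]; first exact: connect0.
    by apply: connect1; rewrite strongE /= xpair_eqE eq_sym (negbTE hb) andbF /near eqxx.
  have hj' : j < m by lia.
  apply: connect_trans (IH hj' b) _; apply: connect1.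
  rewrite strongE /= xpair_eqE /near /= !eqxx /=.
  by rewrite andbT orbT andbT; apply/eqP => /(congr1 val) /=; lia.
have hc' : forall q, connect E z0 q by case=> [[j hj] b]; apply: hc.
move=> x y; apply: connect_trans (hc' y).
by rewrite (sym_connect_sym Esym).
Qed.

Lemma sum_prod (f : 'I_m -> nat) : \sum_(t : V) f t.1 = 3 * \sum_(j : 'I_m) f j.
Proof.
rewrite -(pair_big xpredT xpredT (fun i (_ : 'I_3) => f i)) /=.
rewrite big_distrr /=; apply: eq_bigr => i _.
by rewrite sum_nat_const card_ord.
Qed.

Lemma sum_eqc (c : nat) : \sum_(j : 'I_m) (((j : nat) == c) : nat) <= 1.
Proof.
rewrite -cardP_sum; apply/card_le1_eqP => a b; rewrite !inE => /eqP ha /eqP hb.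
by apply/val_inj; rewrite /= ha hb.
Qed.

Lemma sum_eqi (i : 'I_m) : \sum_(j : 'I_m) (((j : nat) == i) : nat) = 1.
Proof. exact: sum_eq_ind. Qed.

Lemma Edirac : locally_dirac E.
Proof.
move=> v u; rewrite inE => hvu.
rewrite /deg /deg_in_nbhd /nbhd.
have -> : [set w in [set u0 | E v u0] | E u w] = [set w | E v w && E u w].
  by apply/setP => t; rewrite !inE.
rewrite !cardP_sum.
have hrow : forall t : V, ((t.1 == v.1) : nat) <= E v t + (t == v).
  move=> t; rewrite strongE /near.
  case: (eqVneq t v) => [-> | htv]; first by rewrite !eqxx.
  rewrite /= addn0.
  have -> : (v.1 == t.1 :> nat) = (t.1 == v.1) by rewrite eq_sym.
  by case: (t.1 == v.1).
have s0 : \sum_(t : V) ((t.1 == v.1) : nat) <= \sum_t (E v t : nat) + 1.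
  by have := leq_sumT hrow; rewrite big_split /= sum_eq_ind.
have e3 : \sum_(t : V) ((t.1 == v.1) : nat) = 3.
  by rewrite (sum_prod (fun j => ((j == v.1) : nat))) sum_eq_ind.
rewrite e3 in s0.
case: (eqVneq u.1 v.1) => hu.
  have p : forall t : V, (E v t : nat) <= (E v t && E u t) + (t == u).
    move=> t; rewrite !strongE hu.
    by case: (eqVneq t u) => [-> | htu] /=; case: (_ != _); case: near.
  have s : \sum_t (E v t : nat) <= \sum_t ((E v t && E u t) : nat) + 1.
    by have := leq_sumT p; rewrite big_split /= sum_eq_ind.
  lia.
have hnear : near v.1 u.1 by move: hvu; rewrite strongE => /andP[].
have p : forall t : V, ((t.1 == v.1) : nat) + (t.1 == u.1)
    <= (E v t && E u t) + (t == v) + (t == u).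
  move=> t; rewrite !strongE.
  have hu' : (v.1 == u.1) = false by rewrite eq_sym (negbTE hu).
  case: (eqVneq t v) => [-> | htv].
    by rewrite eqxx hu' /= leq_addr.
  case: (eqVneq t u) => [-> | htu].
    by rewrite eqxx (negbTE hu) /=; case: (_ && _).
  have htu' : u != t by rewrite eq_sym.
  have htv' : v != t by rewrite eq_sym.
  rewrite /= ?addn0.
  case: (eqVneq t.1 v.1) => [e1 | h1].
    by rewrite e1 hu' (near_sym u.1) hnear /near eqxx.
  case: (eqVneq t.1 u.1) => [e2 | h2]; last by case: (_ && _).
  by rewrite e2 hnear /near eqxx.
have s : \sum_(t : V) ((t.1 == v.1) : nat) + \sum_(t : V) ((t.1 == u.1) : nat)
    <= \sum_t ((E v t && E u t) : nat) + 1 + 1.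
  by have := leq_sumT p; rewrite !big_split /= !sum_eq_ind.
have e3' : \sum_(t : V) ((t.1 == u.1) : nat) = 3.
  by rewrite (sum_prod (fun j => ((j == u.1) : nat))) sum_eq_ind.
rewrite e3 e3' in s.
have q : forall t : V, (E v t : nat) + (t == v)
   <= (((t.1 : nat) == v.1) : nat) + (((t.1 : nat).+1 == v.1) : nat) + ((v.1.+1 == t.1) : nat).
  move=> t; rewrite strongE near_sym /near.
  case: (eqVneq t v) => [-> | htv] /=; first by rewrite eqxx; lia.
  by case: (_ == _); case: (_ == _); case: (_ == _).
have s2 : \sum_t (E v t : nat) + 1 <= \sum_(t : V) (((t.1 : nat) == v.1) : nat)
   + \sum_(t : V) (((t.1 : nat).+1 == v.1) : nat) + \sum_(t : V) ((v.1.+1 == t.1) : nat).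
  by have := leq_sumT q; rewrite !big_split /= sum_eq_ind.
rewrite (sum_prod (fun j => (((j : nat) == v.1) : nat))) in s2.
rewrite (sum_prod (fun j => (((j : nat).+1 == v.1) : nat))) in s2.
rewrite (sum_prod (fun j => (((v.1 : nat).+1 == j) : nat))) in s2.
have a1 := sum_eqc v.1.
have a2 : \sum_(j : 'I_m) (((j : nat).+1 == v.1) : nat) <= 1.
  apply: leq_trans (sum_eqc (v.1).-1); apply: leq_sum => j _.
  by case: eqP => //= <-; rewrite eqxx.
have a3 : \sum_(j : 'I_m) (((v.1 : nat).+1 == j) : nat) <= 1.
  by apply: leq_trans (sum_eqc (v.1).+1); apply: leq_sum => j _; rewrite eq_sym.
lia.
Qed.

Lemma walk_row k : forall (x y : V), walkb E x y k -> (y.1 : nat) <= x.1 + k.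
Proof.
elim: k => [|k IH] x y.
  by rewrite walk0 => /eqP ->; rewrite addn0.
move=> /walk_pred [u [hu huy]].
have := IH _ _ hu; have := near_row huy; lia.
Qed.

Lemma part2 : simple_graph E /\ connected_graph E /\ locally_dirac E /\
      #|{: V}| = 3 * m /\
      diam E = #|{: V}| %/ 3 - 1 /\
      diam E = m - 1.
Proof.
have hcard : #|{: V}| = 3 * m by rewrite card_prod !card_ord mulnC.
have hs : simple_graph E by split; [exact: Esym | exact: Eirr].
have up := part1 hs Econn Edirac (ltac:(rewrite hcard; lia)).
have hm1 : m.-1 < m by lia.
set zm : V := (Ordinal hm1, ord0).
have lo : m - 1 <= diam E.
  have hw := dist_walk Econn z0 zm.
  have := walk_row hw; rewrite /= => h.
  rewrite /diam.
  have h1 := @leq_bigmax _ (fun y => dist E z0 y) zm.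
  have h2 := @leq_bigmax _ (fun x => \max_y dist E x y) z0.
  apply: (leq_trans _ h2); apply: (leq_trans _ h1); lia.
rewrite hcard in up *.
split; first exact: hs.
split; first exact: Econn.
split; first exact: Edirac.
split; first done.
split; lia.
Qed.

End Ex.

Theorem mainTheorem9 :
  (forall (T : finType) (e : rel T),
      simple_graph e -> connected_graph e -> locally_dirac e -> 9 <= #|T| ->
      diam e <= #|T| %/ 3 - 1)
  /\
  (forall m : nat, 3 <= m ->
      simple_graph (strong (@Prel m) K3rel) /\
      connected_graph (strong (@Prel m) K3rel) /\
      locally_dirac (strong (@Prel m) K3rel) /\
      #|{: 'I_m * 'I_3}| = 3 * m /\
      diam (strong (@Prel m) K3rel) = #|{: 'I_m * 'I_3}| %/ 3 - 1 /\
      diam (strong (@Prel m) K3rel) = m - 1).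
Proof.
split; first exact: part1.
by move=> m hm; apply: part2.
Qed.
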